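(* For every $\widehat r\in\mathbb{N}$ and every $m\ge1$, \[\mathrm{Var}(\mu^{(b^m\widehat r+1)})=\Big(1-\frac1{b^m}\Big)\mathrm{Var}(\mu^{(\widehat r)})+\frac1{b^m}\mathrm{Var}(\mu^{(\widehat r+1)})+b-\frac1{b^{m-1}}.\]
   Context: Fix an integer $b\ge2$. For $n\in\mathbb{N}$ with base-$b$ digits $n_k$, $s(n):=\sum_kn_k$. For $r,n\in\mathbb{N}$, $\Delta^{(r)}(n):=s(n+r)-s(n)$, and $\mu^{(r)}(d):=\lim_{N\to\infty}\frac1N|\{n<N:\Delta^{(r)}(n)=d\}|$ for $d\in\mathbb{Z}$; these limits exist and $\mu^{(r)}$ is a probability measure on $\mathbb{Z}$ with finite moments. $\mathrm{Var}(\mu^{(r)})$ is its variance. *)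

(* Defs.v *)
From Stdlib Require Import Reals Lra Lia ZArith Arith List.
From Coquelicot Require Import Coquelicot.
Open Scope R_scope.

(* Base-b digit sum s(n) = sum_k n_k, computed with fuel; for b >= 2,
   fuel n suffices since n / b < n for n > 0. *)
Fixpoint digsum_aux (b fuel n : nat) : nat :=
  match fuel with
  | O => O
  | S f => (n mod b + digsum_aux b f (n / b))%nat
  end.

Definition digsum (b n : nat) : nat := digsum_aux b n n.

Definition Delta (b r n : nat) : Z :=
  (Z.of_nat (digsum b (n + r)) - Z.of_nat (digsum b n))%Z.

Definition count_Delta (b r : nat) (d : Z) (N : nat) : nat :=
  length (filter (fun n => Z.eqb (Delta b r n) d) (seq 0 N)).

Definition mu (b r : nat) (d : Z) : R :=
  real (Lim_seq (fun N => INR (count_Delta b r d N) / INR N)).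

Definition sumZ (f : Z -> R) : R :=
  Series (fun k => f (Z.of_nat k)) + Series (fun k => f (- Z.of_nat k - 1)%Z).

Definition VarMu (m : Z -> R) : R :=
  sumZ (fun d => (IZR d) ^ 2 * m d) - (sumZ (fun d => IZR d * m d)) ^ 2.

(* Main.v *)
Require Import Defs.
From Stdlib Require Import Reals.
From Coquelicot Require Import Coquelicot.
Open Scope R_scope.
From Stdlib Require Import Lra Lia ZArith Arith List.
Require Import Defs.
Open Scope R_scope.

Section Digits.
Variable b : nat.
Hypothesis Hb : (2 <= b)%nat.
Local Open Scope nat_scope.

Lemma aux0 : forall f, digsum_aux b f 0 = 0%nat.
Proof.
  induction f; simpl; auto. rewrite Nat.mod_0_l, Nat.div_0_l by lia. rewrite IHf; auto.
Qed.

Lemma aux_fuel : forall f1 f2 n, (n <= f1)%nat -> (n <= f2)%nat ->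
  digsum_aux b f1 n = digsum_aux b f2 n.
Proof.
  induction f1; intros f2 n H1 H2.
  - assert (n = 0%nat) by lia. subst. rewrite !aux0. reflexivity.
  - destruct (Nat.eq_dec n 0) as [->|Hn]. { rewrite !aux0; auto. }
    destruct f2 as [|f2]; [lia|]. simpl. f_equal.
    assert (n / b < n)%nat by (apply Nat.div_lt; lia).
    apply IHf1; lia.
Qed.

Lemma digsum_eq : forall n, digsum b n = (n mod b + digsum b (n / b))%nat.
Proof.
  intros n. destruct (Nat.eq_dec n 0) as [->|Hn].
  - unfold digsum. simpl. rewrite Nat.mod_0_l, Nat.div_0_l by lia. reflexivity.
  - unfold digsum. destruct n as [|n]; [lia|]. simpl. f_equal.
    assert (S n / b < S n)%nat by (apply Nat.div_lt; lia).
    apply aux_fuel; lia.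
Qed.

Lemma digsum0 : digsum b 0 = 0%nat.
Proof. reflexivity. Qed.

Lemma digsum_small : forall x, (x < b)%nat -> digsum b x = x.
Proof.
  intros x Hx. rewrite digsum_eq. rewrite Nat.mod_small, Nat.div_small by lia.
  rewrite digsum0; lia.
Qed.

Lemma divmod_b : forall k y, (y < b)%nat -> (b * k + y) mod b = y /\ (b * k + y) / b = k.
Proof.
  intros k y Hy. split.
  - symmetry. apply (Nat.mod_unique _ _ k); lia.
  - symmetry. apply (Nat.div_unique _ _ _ y); lia.
Qed.

Lemma digsum_split : forall m x y, (y < b ^ m)%nat ->
  digsum b (b ^ m * x + y) = (digsum b x + digsum b y)%nat.
Proof.
  induction m; intros x y Hy.
  - simpl in *. assert (y = 0%nat) by lia. subst. rewrite digsum0. rewrite Nat.add_0_r, Nat.add_0_r, Nat.add_0_r. reflexivity.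
  - rewrite (Nat.div_mod y b) by lia.
    set (y1 := (y / b)%nat). set (y0 := (y mod b)%nat).
    assert (y0 < b)%nat by (apply Nat.mod_upper_bound; lia).
    assert (y1 < b ^ m)%nat.
    { unfold y1. apply Nat.div_lt_upper_bound; [lia|]. simpl in Hy. lia. }
    replace (b ^ S m * x + (b * y1 + y0))%nat with (b * (b ^ m * x + y1) + y0)%nat
      by (simpl; ring).
    rewrite digsum_eq. destruct (divmod_b (b ^ m * x + y1) y0) as [-> ->]; auto.
    rewrite IHm by auto.
    rewrite (digsum_eq (b * y1 + y0)). destruct (divmod_b y1 y0) as [-> ->]; auto. lia.
Qed.

Definition cc (B t a : nat) : nat := ((a + t) / B)%nat.
Definition ee (B t a : nat) : Z :=
  (Z.of_nat (digsum b ((a + t) mod B)) - Z.of_nat (digsum b a))%Z.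

Lemma Delta_split : forall m r' t q a, (a < b ^ m)%nat -> (t <= b ^ m)%nat ->
  Delta b (b ^ m * r' + t) (b ^ m * q + a) =
  (ee (b ^ m) t a + Delta b (r' + cc (b ^ m) t a) q)%Z.
Proof.
  intros m r' t q a Ha Ht. unfold Delta, ee, cc.
  set (B := (b ^ m)%nat) in *.
  assert (HB : (B <> 0)%nat) by lia.
  pose proof (Nat.div_mod (a + t) B HB) as Hdm.
  assert ((a + t) mod B < B)%nat by (apply Nat.mod_upper_bound; lia).
  replace (B * q + a + (B * r' + t))%nat with (B * (q + (r' + (a + t) / B)) + (a + t) mod B)%nat by lia.
  unfold B. rewrite !digsum_split by auto. lia.
Qed.

End Digits.

Fixpoint nsum (f : nat -> nat) (n : nat) : nat :=
  match n with O => O | S k => (nsum f k + f k)%nat end.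
Fixpoint rsum (f : nat -> R) (n : nat) : R :=
  match n with O => 0 | S k => rsum f k + f k end.

Definition cnt (P : nat -> bool) (n : nat) : nat := nsum (fun i => if P i then 1%nat else 0%nat) n.

Lemma count_cnt : forall b r d N, count_Delta b r d N = cnt (fun n => Z.eqb (Delta b r n) d) N.
Proof.
  intros b r d N. unfold count_Delta. induction N.
  - reflexivity.
  - rewrite seq_S, filter_app, length_app, IHN. unfold cnt. simpl.
    destruct (Z.eqb (Delta b r N) d); simpl; lia.
Qed.

Lemma nsum_ext : forall f g n, (forall i, (i < n)%nat -> f i = g i) -> nsum f n = nsum g n.
Proof. induction n; simpl; intros; auto. rewrite IHn, H; auto. Qed.
Lemma rsum_ext : forall f g n, (forall i, (i < n)%nat -> f i = g i) -> rsum f n = rsum g n.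
Proof. induction n; simpl; intros; auto. rewrite IHn, H; auto. Qed.
Lemma nsum_add : forall f n k, nsum f (n + k) = (nsum f n + nsum (fun i => f (n + i)%nat) k)%nat.
Proof. induction k; intros; simpl. rewrite Nat.add_0_r; lia. rewrite Nat.add_succ_r. simpl. rewrite IHk. lia. Qed.
Lemma nsum_plus : forall f g n, nsum (fun i => f i + g i)%nat n = (nsum f n + nsum g n)%nat.
Proof. induction n; simpl; lia. Qed.
Lemma rsum_plus : forall f g n, rsum (fun i => f i + g i) n = rsum f n + rsum g n.
Proof. induction n; simpl; intros; lra. Qed.
Lemma rsum_scal : forall c f n, rsum (fun i => c * f i) n = c * rsum f n.
Proof. induction n; simpl; intros; lra. Qed.
Lemma rsum_const : forall c n, rsum (fun _ => c) n = INR n * c.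
Proof. induction n; simpl; intros. lra. rewrite IHn. destruct n; simpl; lra. Qed.
Lemma rsum_first : forall f n, rsum f (S n) = f O + rsum (fun i => f (S i)) n.
Proof. induction n; simpl; intros. lra. simpl in IHn. rewrite IHn. lra. Qed.
Lemma INR_nsum : forall f n, INR (nsum f n) = rsum (fun i => INR (f i)) n.
Proof. induction n; simpl; auto. rewrite plus_INR, IHn. auto. Qed.

Lemma cnt_le : forall P n, (cnt P n <= n)%nat.
Proof. unfold cnt; induction n; simpl; auto. destruct (P n); lia. Qed.

Lemma cnt_add : forall P n k, (cnt P n <= cnt P (n + k) <= cnt P n + k)%nat.
Proof.
  intros. unfold cnt. rewrite nsum_add. pose proof (cnt_le (fun i => P (n+i)%nat) k).
  unfold cnt in H. lia.
Qed.

Lemma cnt_block : forall P B M,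
  cnt P (B * M) = nsum (fun a => cnt (fun q => P (B * q + a)%nat) M) B.
Proof.
  intros P B M. induction M.
  - rewrite Nat.mul_0_r. unfold cnt. simpl. induction B; simpl; auto. rewrite <- IHB. reflexivity.
  - replace (B * S M)%nat with (B * M + B)%nat by lia. unfold cnt in *.
    rewrite nsum_add, IHM. simpl.
    rewrite <- nsum_plus. apply nsum_ext. intros i Hi. f_equal.
Qed.

Lemma is_lim_seq_rsum : forall (f : nat -> nat -> R) (L : nat -> R) n,
  (forall a, (a < n)%nat -> is_lim_seq (f a) (L a)) ->
  is_lim_seq (fun M => rsum (fun a => f a M) n) (rsum L n).
Proof.
  induction n; intros H; simpl.
  - apply is_lim_seq_const.
  - apply is_lim_seq_plus'. apply IHn; auto. apply H; lia.
Qed.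

Lemma lim_inv_n : is_lim_seq (fun n => / INR n) 0.
Proof.
  replace (Finite 0) with (Rbar_inv p_infty) by reflexivity.
  apply is_lim_seq_inv. apply is_lim_seq_INR. discriminate.
Qed.

Lemma dens_block : forall (P : nat -> bool) (B : nat) (L : nat -> R), (0 < B)%nat ->
  (forall a, (a < B)%nat -> is_lim_seq (fun M => INR (cnt (fun q => P (B * q + a)%nat) M) / INR M) (L a)) ->
  is_lim_seq (fun N => INR (cnt P N) / INR N) (/ INR B * rsum L B).
Proof.
  intros P B L HB H.
  set (l := / INR B * rsum L B).
  assert (HBR : 0 < INR B) by (apply lt_0_INR; lia).
  assert (Hv : is_lim_seq (fun M => INR (cnt P (B * M)) / INR (B * M)) l).
  { apply is_lim_seq_ext_loc with
      (u := fun M => / INR B * rsum (fun a => INR (cnt (fun q => P (B * q + a)%nat) M) / INR M) B).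
    - exists 1%nat. intros M HM. rewrite cnt_block, INR_nsum, mult_INR.
      assert (0 < INR M) by (apply lt_0_INR; lia).
      unfold Rdiv. rewrite <- rsum_scal. rewrite (Rmult_comm (rsum _ B)), <- rsum_scal.
      apply rsum_ext. intros i _. rewrite Rinv_mult. ring.
    - unfold l. apply (is_lim_seq_scal_l _ (/ INR B) (rsum L B)).
      apply is_lim_seq_rsum. auto. }
  assert (Hw : is_lim_seq (fun N => INR (cnt P (B * (N / B))) / INR (B * (N / B))) l).
  { apply (is_lim_seq_subseq (fun M => INR (cnt P (B * M)) / INR (B * M)) l (fun N => (N / B)%nat)); auto.
    intros Q [N0 HN0]. exists (N0 * B)%nat. intros n Hn. apply HN0.
    apply Nat.div_le_lower_bound; lia. }
  assert (Hr : is_lim_seq (fun N => INR (B * (N / B)) / INR N) 1).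
  { apply is_lim_seq_le_le_loc with (u := fun N => 1 - INR B * / INR N) (w := fun _ => 1).
    - exists (S B). intros N HN.
      assert (0 < INR N) by (apply lt_0_INR; lia).
      pose proof (Nat.div_mod N B ltac:(lia)).
      pose proof (Nat.mod_upper_bound N B ltac:(lia)).
      assert (INR (B * (N / B)) <= INR N) by (apply le_INR; lia).
      assert (INR N <= INR (B * (N / B)) + INR B) by (rewrite <- plus_INR; apply le_INR; lia).
      split.
      + apply (Rmult_le_reg_r (INR N)); auto. unfold Rdiv. field_simplify; try lra.
      + apply (Rmult_le_reg_r (INR N)); auto. unfold Rdiv. field_simplify; try lra.
    - replace (Finite 1) with (Finite (1 - INR B * 0)) by (f_equal; ring).
      apply is_lim_seq_minus'. apply is_lim_seq_const.
      apply (is_lim_seq_scal_l _ (INR B) 0). apply lim_inv_n.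
    - apply is_lim_seq_const. }
  apply is_lim_seq_le_le_loc with
    (u := fun N => INR (cnt P (B * (N / B))) / INR (B * (N / B)) * (INR (B * (N / B)) / INR N))
    (w := fun N => INR (cnt P (B * (N / B))) / INR (B * (N / B)) * (INR (B * (N / B)) / INR N) + INR B * / INR N).
  - exists (S B). intros N HN.
    assert (0 < INR N) by (apply lt_0_INR; lia).
    assert (HM : (1 <= N / B)%nat) by (apply Nat.div_le_lower_bound; lia).
    assert (0 < INR (B * (N / B))) by (apply lt_0_INR; nia).
    pose proof (Nat.div_mod N B ltac:(lia)).
    pose proof (Nat.mod_upper_bound N B ltac:(lia)).
    pose proof (cnt_add P (B * (N / B)) (N mod B)) as Hca.
    replace (B * (N / B) + N mod B)%nat with N in Hca by lia.
    assert (INR (cnt P (B * (N / B))) <= INR (cnt P N)) by (apply le_INR; lia).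
    assert (INR (cnt P N) <= INR (cnt P (B * (N / B))) + INR B) by (rewrite <- plus_INR; apply le_INR; lia).
    split.
    + apply (Rmult_le_reg_r (INR N)); auto. unfold Rdiv. field_simplify; try lra.
    + apply (Rmult_le_reg_r (INR N)); auto. unfold Rdiv. field_simplify; try lra.
  - replace (Finite l) with (Finite (l * 1)) by (f_equal; ring).
    apply is_lim_seq_mult'; auto.
  - replace (Finite l) with (Finite (l * 1 + INR B * 0)) by (f_equal; ring).
    apply is_lim_seq_plus'. apply is_lim_seq_mult'; auto.
    apply (is_lim_seq_scal_l _ (INR B) 0). apply lim_inv_n.
Qed.

Lemma cnt_ext : forall P Q n, (forall i, P i = Q i) -> cnt P n = cnt Q n.
Proof. intros. unfold cnt. apply nsum_ext. intros. rewrite H. auto. Qed.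

Section Dens.
Variable b : nat.
Hypothesis Hb : (2 <= b)%nat.

Definition U (r : nat) (d : Z) := fun N => INR (count_Delta b r d N) / INR N.

Lemma mu_eq : forall r d (L : R), is_lim_seq (U r d) L -> mu b r d = L.
Proof.
  intros r d L H. unfold mu. apply is_lim_seq_unique in H. unfold U in H. rewrite H. reflexivity.
Qed.

Lemma mixture_lim : forall m r' t d, (t <= b ^ m)%nat ->
  (forall a, (a < b ^ m)%nat -> exists L : R, is_lim_seq (U (r' + cc (b ^ m) t a) (d - ee b (b ^ m) t a)%Z) L) ->
  is_lim_seq (U (b ^ m * r' + t) d)
    (/ INR (b ^ m) * rsum (fun a => mu b (r' + cc (b ^ m) t a) (d - ee b (b ^ m) t a)%Z) (b ^ m)).
Proof.
  intros m r' t d Ht H.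
  assert (HB : (0 < b ^ m)%nat) by (apply Nat.neq_0_lt_0, Nat.pow_nonzero; lia).
  apply is_lim_seq_ext with (u := fun N => INR (cnt (fun n => Z.eqb (Delta b (b ^ m * r' + t) n) d) N) / INR N).
  { intros N. unfold U. rewrite count_cnt. reflexivity. }
  apply dens_block; auto.
  intros a Ha. destruct (H a Ha) as [L HL].
  rewrite (mu_eq _ _ _ HL).
  eapply is_lim_seq_ext; [|apply HL].
  intros M. unfold U. rewrite count_cnt. do 2 f_equal. apply cnt_ext. intros q.
  rewrite Delta_split by auto.
  destruct (Z.eqb_spec (ee b (b ^ m) t a + Delta b (r' + cc (b ^ m) t a) q) d);
  destruct (Z.eqb_spec (Delta b (r' + cc (b ^ m) t a) q) (d - ee b (b ^ m) t a)); auto; lia.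
Qed.

Lemma mu_mix : forall m r' t d, (t <= b ^ m)%nat ->
  (forall a, (a < b ^ m)%nat -> exists L : R, is_lim_seq (U (r' + cc (b ^ m) t a) (d - ee b (b ^ m) t a)%Z) L) ->
  mu b (b ^ m * r' + t) d =
    / INR (b ^ m) * rsum (fun a => mu b (r' + cc (b ^ m) t a) (d - ee b (b ^ m) t a)%Z) (b ^ m).
Proof. intros. apply mu_eq. apply mixture_lim; auto. Qed.

Lemma Delta0 : forall n, Delta b 0 n = 0%Z.
Proof. intros n. unfold Delta. rewrite Nat.add_0_r. lia. Qed.

Lemma U0 : forall d, is_lim_seq (U 0 d) (Finite (if Z.eqb d 0 then 1 else 0)).
Proof.
  intros d. apply is_lim_seq_ext_loc with (u := fun _ => if Z.eqb d 0 then 1 else 0).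
  - exists 1%nat. intros N HN. unfold U. rewrite count_cnt.
    assert (0 < INR N) by (apply lt_0_INR; lia).
    replace (cnt (fun n => (Delta b 0 n =? d)%Z) N) with (if Z.eqb d 0 then N else 0%nat).
    + destruct (Z.eqb d 0); simpl; field; lra.
    + unfold cnt. clear HN H. induction N; simpl. destruct (d =? 0)%Z; auto.
      rewrite <- IHN, Delta0. destruct (Z.eqb_spec d 0); destruct (Z.eqb_spec 0 d); try lia.
  - apply is_lim_seq_const.
Qed.

Lemma mu0 : forall d, mu b 0 d = if Z.eqb d 0 then 1 else 0.
Proof. intros. apply mu_eq, U0. Qed.

Lemma U_bounds : forall r d N, 0 <= U r d N <= 1.
Proof.
  intros r d N. unfold U. rewrite count_cnt. pose proof (cnt_le (fun n => (Delta b r n =? d)%Z) N).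
  destruct N as [|N]. { unfold cnt. simpl. unfold Rdiv. rewrite Rmult_0_l. lra. }
  assert (0 < INR (S N)) by (apply lt_0_INR; lia).
  apply le_INR in H. split.
  - apply Rmult_le_pos. apply pos_INR. left. apply Rinv_0_lt_compat; lra.
  - apply (Rmult_le_reg_r (INR (S N))); auto. unfold Rdiv. rewrite Rmult_assoc, Rinv_l; lra.
Qed.

Lemma mu_bounds : forall r d (L : R), is_lim_seq (U r d) L -> 0 <= mu b r d <= 1.
Proof.
  intros r d L H. rewrite (mu_eq _ _ _ H). split.
  - assert (Rbar_le 0 L). { apply (is_lim_seq_le (fun _ => 0) (U r d)); auto. intros; apply U_bounds. apply is_lim_seq_const. } auto.
  - assert (Rbar_le L 1). { apply (is_lim_seq_le (U r d) (fun _ => 1)); auto. intros; apply U_bounds. apply is_lim_seq_const. } auto.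
Qed.

Lemma cc1 : forall a, (a < b)%nat -> cc b 1 a = (if Nat.eqb a (b - 1) then 1 else 0)%nat.
Proof.
  intros a Ha. unfold cc. destruct (Nat.eqb_spec a (b-1)).
  - subst. replace (b - 1 + 1)%nat with b by lia. apply Nat.div_same; lia.
  - apply Nat.div_small; lia.
Qed.

Lemma ee1 : forall a, (a < b)%nat -> ee b b 1 a = (if Nat.eqb a (b - 1) then - Z.of_nat (b - 1) else 1)%Z.
Proof.
  intros a Ha. unfold ee. destruct (Nat.eqb_spec a (b-1)).
  - subst. replace (b - 1 + 1)%nat with b by lia. rewrite Nat.mod_same by lia.
    rewrite digsum0, digsum_small by lia. lia.
  - rewrite Nat.mod_small by lia. rewrite !digsum_small by lia. lia.
Qed.

Lemma Delta1_le : forall n, (Delta b 1 n <= 1)%Z.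
Proof.
  intros n. induction n as [n IH] using lt_wf_ind.
  pose proof (Nat.div_mod n b ltac:(lia)) as Hn.
  pose proof (Nat.mod_upper_bound n b ltac:(lia)) as Hm.
  pose proof (Delta_split b Hb 1 0 1 (n / b) (n mod b)) as HD.
  rewrite Nat.pow_1_r in HD. rewrite Nat.mul_0_r, Nat.add_0_l in HD.
  rewrite <- Hn in HD. rewrite HD by lia.
  rewrite cc1, ee1 by auto.
  destruct (Nat.eqb_spec (n mod b) (b - 1)).
  - simpl. assert (n / b < n)%nat. { apply Nat.div_lt; lia. }
    specialize (IH _ H). lia.
  - simpl. rewrite Delta0. lia.
Qed.

End Dens.

Lemma rsum_last : forall f n, (1 <= n)%nat -> rsum f n = rsum f (n - 1) + f (n - 1)%nat.
Proof. intros f n H. destruct n; [lia|]. simpl. rewrite Nat.sub_0_r. auto. Qed.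

Section One.
Variable b : nat.
Hypothesis Hb : (2 <= b)%nat.

Lemma U1_ex : forall d, exists L : R, is_lim_seq (U b 1 d) L.
Proof.
  intros d. remember (Z.to_nat (2 - d)) as n. revert d Heqn.
  induction n as [n IH] using lt_wf_ind. intros d Hn.
  destruct (Z_le_gt_dec 2 d).
  - exists 0. apply is_lim_seq_ext with (u := fun _ => 0); [|apply is_lim_seq_const].
    intros N. unfold U. rewrite count_cnt.
    replace (cnt (fun n0 => (Delta b 1 n0 =? d)%Z) N) with 0%nat. simpl. unfold Rdiv. ring.
    unfold cnt. induction N; simpl; auto. rewrite <- IHN.
    pose proof (Delta1_le b Hb N). destruct (Z.eqb_spec (Delta b 1 N) d); lia.
  - pose proof (mixture_lim b Hb 1 0 1 d) as H.
    replace (b ^ 1 * 0 + 1)%nat with 1%nat in H by lia.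
    eexists. apply H. { rewrite Nat.pow_1_r; lia. }
    intros a Ha. rewrite Nat.pow_1_r in Ha |- *. rewrite cc1, ee1 by lia.
    destruct (Nat.eqb_spec a (b - 1)).
    + simpl. apply (IH (Z.to_nat (2 - (d - - Z.of_nat (b - 1))))); auto. lia.
    + simpl. eexists. apply U0; lia.
Qed.

Lemma mu1_bounds : forall d, 0 <= mu b 1 d <= 1.
Proof. intros d. destruct (U1_ex d) as [L HL]. eapply mu_bounds; eauto. Qed.

Lemma mu1_zero : forall d, (2 <= d)%Z -> mu b 1 d = 0.
Proof.
  intros d Hd. apply mu_eq.
  apply is_lim_seq_ext with (u := fun _ => 0); [|apply is_lim_seq_const].
  intros N. unfold U. rewrite count_cnt.
  replace (cnt (fun n0 => (Delta b 1 n0 =? d)%Z) N) with 0%nat. simpl. unfold Rdiv. ring.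
  unfold cnt. induction N; simpl; auto. rewrite <- IHN.
  pose proof (Delta1_le b Hb N). destruct (Z.eqb_spec (Delta b 1 N) d); lia.
Qed.

Lemma mu1_mix : forall d, mu b 1 d =
  / INR b * ((INR b - 1) * mu b 0 (d - 1) + mu b 1 (d + Z.of_nat (b - 1))).
Proof.
  intros d. pose proof (mu_mix b Hb 1 0 1 d) as H.
  replace (b ^ 1 * 0 + 1)%nat with 1%nat in H by lia.
  rewrite H; clear H.
  2:{ rewrite Nat.pow_1_r; lia. }
  2:{ intros a Ha. rewrite Nat.pow_1_r in Ha |- *. rewrite cc1, ee1 by lia.
      destruct (Nat.eqb_spec a (b - 1)). apply U1_ex. eexists. apply U0; lia. }
  rewrite Nat.pow_1_r. f_equal.
  rewrite rsum_last by lia.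
  rewrite cc1, ee1 by lia. rewrite Nat.eqb_refl.
  rewrite (rsum_ext _ (fun _ => mu b 0 (d - 1))).
  - rewrite rsum_const. rewrite minus_INR by lia. simpl INR. simpl.
    replace (d - - Z.of_nat (b - 1))%Z with (d + Z.of_nat (b - 1))%Z by lia. ring.
  - intros i Hi. rewrite cc1, ee1 by lia. destruct (Nat.eqb_spec i (b - 1)); [lia|]. reflexivity.
Qed.

Lemma mu1_rec : forall d, (d <= 0)%Z -> mu b 1 d = / INR b * mu b 1 (d + Z.of_nat (b - 1)).
Proof.
  intros d Hd. rewrite mu1_mix. rewrite mu0 by lia. destruct (Z.eqb_spec (d - 1) 0); [lia|]. ring.
Qed.

Definition rho : R := 1 - / (2 * INR (b - 1)).

Lemma bernoulli : forall x n, 0 <= x <= 1 -> 1 - INR n * x <= (1 - x) ^ n.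
Proof.
  intros x n Hx. induction n. simpl. lra.
  rewrite S_INR. simpl.
  assert (0 <= INR n) by apply pos_INR.
  assert (0 <= x * (INR n * x)) by (apply Rmult_le_pos; try lra; apply Rmult_le_pos; lra).
  assert ((1 - x) * (1 - INR n * x) <= (1 - x) * (1 - x) ^ n) by (apply Rmult_le_compat_l; lra).
  nra.
Qed.

Lemma rho_props : 0 < rho < 1 /\ / INR b <= rho ^ (b - 1).
Proof.
  assert (Hb1 : 1 <= INR (b - 1)) by (apply (le_INR 1); lia).
  assert (Hb2 : INR b = INR (b - 1) + 1) by (rewrite minus_INR by lia; simpl; ring).
  unfold rho. split.
  - split.
    + assert (/ (2 * INR (b - 1)) <= / 2) by (apply Rinv_le_contravar; lra). lra.
    + assert (0 < / (2 * INR (b - 1))) by (apply Rinv_0_lt_compat; lra). lra.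
  - pose proof (bernoulli (/ (2 * INR (b - 1))) (b - 1)) as HB.
    assert (0 < / (2 * INR (b - 1))) by (apply Rinv_0_lt_compat; lra).
    assert (/ (2 * INR (b - 1)) <= / 2) by (apply Rinv_le_contravar; lra).
    assert (INR (b - 1) * / (2 * INR (b - 1)) = / 2) by (field; lra).
    assert (/ INR b <= / 2) by (apply Rinv_le_contravar; lra).
    specialize (HB ltac:(lra)). lra.
Qed.

Lemma mu1_decay : forall j, mu b 1 (- Z.of_nat j) <= rho ^ j.
Proof.
  destruct rho_props as [[Hr0 Hr1] Hrb].
  assert (HbR : 0 < INR b) by (apply lt_0_INR; lia).
  intros j. induction j as [j IH] using lt_wf_ind.
  rewrite mu1_rec by lia.
  destruct (le_lt_dec (b - 1) j).
  - replace (- Z.of_nat j + Z.of_nat (b - 1))%Z with (- Z.of_nat (j - (b - 1)))%Z by lia.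
    assert (j - (b - 1) < j)%nat by lia.
    specialize (IH _ H).
    pose proof (mu1_bounds (- Z.of_nat (j - (b - 1)))).
    replace j with ((j - (b - 1)) + (b - 1))%nat at 2 by lia. rewrite pow_add.
    assert (0 < rho ^ (j - (b - 1))) by (apply pow_lt; lra).
    rewrite Rmult_comm. apply Rmult_le_compat; try lra. left; apply Rinv_0_lt_compat; lra.
  - pose proof (mu1_bounds (- Z.of_nat j + Z.of_nat (b - 1))).
    assert (rho ^ (b - 1) <= rho ^ j).
    { replace (b - 1)%nat with (j + (b - 1 - j))%nat by lia. rewrite pow_add.
      assert (0 < rho ^ j) by (apply pow_lt; lra).
      assert (rho ^ (b - 1 - j) <= 1).
      { destruct (b - 1 - j)%nat eqn:E. simpl; lra. left. apply pow_lt_1_compat; lia || lra. }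
      nra. }
    assert (0 < / INR b) by (apply Rinv_0_lt_compat; lra).
    nra.
Qed.

End One.

Definition Zs (f : Z -> R) : Prop :=
  ex_series (fun k => f (Z.of_nat k)) /\ ex_series (fun k => f (- Z.of_nat k - 1)%Z).

Lemma exR_plus : forall a c : nat -> R, ex_series a -> ex_series c -> ex_series (fun n => a n + c n).
Proof. intros. apply (ex_series_plus a c); auto. Qed.
Lemma exR_scal : forall (k : R) (a : nat -> R), ex_series a -> ex_series (fun n => k * a n).
Proof. intros. apply (ex_series_scal_l k a); auto. Qed.
Lemma exR_zero : ex_series (fun _ : nat => 0).
Proof.
  apply (ex_series_ext (fun n => 0 * (/2) ^ n)). intros; simpl; ring.
  apply exR_scal. apply ex_series_geom. rewrite Rabs_right; lra.
Qed.
Lemma SeriesR_zero : Series (fun _ : nat => 0) = 0.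
Proof.
  rewrite (Series_ext _ (fun n => 0 * 0)). rewrite Series_scal_l. ring. intros; ring.
Qed.

Lemma sumZ_ext : forall f g, (forall d, f d = g d) -> sumZ f = sumZ g.
Proof. intros f g H. unfold sumZ. rewrite (Series_ext _ (fun k => g (Z.of_nat k))), (Series_ext (fun k => f _) (fun k => g (- Z.of_nat k - 1)%Z)); auto. Qed.
Lemma Zs_ext : forall f g, (forall d, f d = g d) -> Zs f -> Zs g.
Proof. intros f g H [H1 H2]. split. eapply (ex_series_ext (fun k => f (Z.of_nat k))); eauto. eapply (ex_series_ext (fun k => f (- Z.of_nat k - 1)%Z)); eauto. Qed.

Lemma Zs_plus : forall f g, Zs f -> Zs g -> Zs (fun d => f d + g d).
Proof. intros f g [] []. split; apply exR_plus; auto. Qed.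
Lemma sumZ_plus : forall f g, Zs f -> Zs g -> sumZ (fun d => f d + g d) = sumZ f + sumZ g.
Proof. intros f g [] []. unfold sumZ. rewrite !Series_plus; auto. ring. Qed.
Lemma Zs_scal : forall k f, Zs f -> Zs (fun d => k * f d).
Proof. intros k f []. split; apply exR_scal; auto. Qed.
Lemma sumZ_scal : forall k f, sumZ (fun d => k * f d) = k * sumZ f.
Proof. intros. unfold sumZ. rewrite !Series_scal_l. ring. Qed.

Lemma Zs_shift1 : forall f, Zs f <-> Zs (fun d => f (d + 1)%Z).
Proof.
  intros f. unfold Zs. split; intros [H1 H2]; split.
  - apply ex_series_incr_1 in H1. eapply ex_series_ext; [|apply H1]. intros n. cbv beta. f_equal. lia.
  - apply ex_series_incr_1. apply ex_series_ext with (a := fun k => f (- Z.of_nat k - 1)%Z); auto.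
    intros n. cbv beta. f_equal. lia.
  - apply ex_series_incr_1. eapply ex_series_ext; [|apply H1]. intros n. cbv beta. f_equal. lia.
  - apply ex_series_incr_1 in H2. eapply ex_series_ext; [|apply H2]. intros n. cbv beta. f_equal. lia.
Qed.

Lemma sumZ_shift1 : forall f, Zs f -> sumZ (fun d => f (d + 1)%Z) = sumZ f.
Proof.
  intros f H. pose proof H as [H1 H2]. apply Zs_shift1 in H as [H3 H4].
  unfold sumZ. rewrite (Series_incr_1 (fun k => f (Z.of_nat k))) by auto.
  rewrite (Series_incr_1 (fun k => f (- Z.of_nat k - 1 + 1)%Z)) by auto.
  rewrite (Series_ext (fun k => f (Z.of_nat (S k))) (fun k => f (Z.of_nat k + 1)%Z)).
  rewrite (Series_ext (fun k => f (- Z.of_nat (S k) - 1 + 1)%Z) (fun k => f (- Z.of_nat k - 1)%Z)).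
  simpl. replace (-0 - 1 + 1)%Z with 0%Z by lia. ring.
  intros; cbv beta; f_equal; lia. intros; cbv beta; f_equal; lia.
Qed.

Lemma Zs_shift : forall e f, Zs f <-> Zs (fun d => f (d + e)%Z).
Proof.
  intros e. induction e using Z.peano_ind; intros f.
  - split; apply Zs_ext; intros; cbv beta; f_equal; lia.
  - rewrite IHe, (Zs_shift1 (fun d => f (d + e)%Z)).
    split; apply Zs_ext; intros; cbv beta; f_equal; lia.
  - rewrite (IHe f), (Zs_shift1 (fun d => f (d + Z.pred e)%Z)).
    split; apply Zs_ext; intros; cbv beta; f_equal; lia.
Qed.

Lemma sumZ_shift : forall e f, Zs f -> sumZ (fun d => f (d + e)%Z) = sumZ f.
Proof.
  intros e. induction e using Z.peano_ind; intros f Hf.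
  - apply sumZ_ext; intros; cbv beta; f_equal; lia.
  - rewrite <- (IHe f Hf). rewrite <- (sumZ_shift1 (fun d => f (d + e)%Z)). apply sumZ_ext; intros; cbv beta; f_equal; lia.
    apply -> Zs_shift; auto.
  - rewrite <- (IHe f Hf).
    assert (Zs (fun d => f (d + Z.pred e)%Z)) by (apply -> Zs_shift; auto).
    rewrite <- (sumZ_shift1 (fun d => f (d + Z.pred e)%Z)) by auto.
    apply sumZ_ext; intros; cbv beta; f_equal; lia.
Qed.

Lemma Zs_rsum : forall (g : nat -> Z -> R) n, (forall a, (a < n)%nat -> Zs (g a)) ->
  Zs (fun d => rsum (fun a => g a d) n) /\
  sumZ (fun d => rsum (fun a => g a d) n) = rsum (fun a => sumZ (g a)) n.
Proof.
  intros g n. induction n; intros H; simpl.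
  - split. split; apply exR_zero. unfold sumZ. rewrite !SeriesR_zero. ring.
  - destruct IHn as [H1 H2]. intros; apply H; lia.
    assert (Zs (g n)) by (apply H; lia). split. apply Zs_plus; auto.
    rewrite (sumZ_plus (fun d => rsum (fun a => g a d) n) (g n)); auto. rewrite H2; auto.
Qed.

Lemma ex_series_evzero : forall (a : nat -> R) N, (forall n, (N <= n)%nat -> a n = 0) -> ex_series a.
Proof.
  intros a N. revert a. induction N; intros a H.
  - eapply ex_series_ext; [|apply exR_zero]. intros n; rewrite H; auto; lia.
  - apply ex_series_incr_1. apply IHN. intros; apply H; lia.
Qed.

Lemma Zs_dirac : forall f, (forall d, d <> 0%Z -> f d = 0) -> Zs f /\ sumZ f = f 0%Z.
Proof.
  intros f H. assert (Zs f).
  { split; apply (ex_series_evzero _ 1); intros; apply H; lia. }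
  split; auto. destruct H0 as [H1 H2]. unfold sumZ.
  rewrite Series_incr_1 by auto.
  rewrite (Series_ext (fun k => f (Z.of_nat (S k))) (fun _ => 0)) by (intros; apply H; lia).
  rewrite (Series_ext (fun k => f (- Z.of_nat k - 1)%Z) (fun _ => 0)) by (intros; apply H; lia).
  rewrite SeriesR_zero. simpl. ring.
Qed.

Definition MomOK (F : Z -> R) : Prop :=
  Zs F /\ Zs (fun d => IZR d * F d) /\ Zs (fun d => IZR d ^ 2 * F d).
Definition S0 F := sumZ F.
Definition S1 F := sumZ (fun d => IZR d * F d).
Definition S2 F := sumZ (fun d => IZR d ^ 2 * F d).

Lemma mom_shift : forall F e, MomOK F ->
  MomOK (fun d => F (d - e)%Z) /\ S0 (fun d => F (d - e)%Z) = S0 F /\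
  S1 (fun d => F (d - e)%Z) = S1 F + IZR e * S0 F /\
  S2 (fun d => F (d - e)%Z) = S2 F + 2 * IZR e * S1 F + IZR e ^ 2 * S0 F.
Proof.
  intros F e [H0 [H1 H2]].
  set (g1 := fun d => IZR d * F d + IZR e * F d).
  set (g2 := fun d => IZR d ^ 2 * F d + (2 * IZR e * (IZR d * F d) + IZR e ^ 2 * F d)).
  assert (Z1 : Zs g1) by (apply Zs_plus; auto; apply Zs_scal; auto).
  assert (Z2 : Zs g2) by (apply Zs_plus; auto; apply Zs_plus; apply Zs_scal; auto).
  assert (E0 : forall d, F (d - e)%Z = F (d + - e)%Z) by (intros; f_equal; lia).
  assert (E1 : forall d, IZR d * F (d - e)%Z = g1 (d + - e)%Z).
  { intros d. unfold g1. replace (d + - e)%Z with (d - e)%Z by lia.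
    replace d with ((d - e) + e)%Z at 1 by lia. rewrite plus_IZR. ring. }
  assert (E2 : forall d, IZR d ^ 2 * F (d - e)%Z = g2 (d + - e)%Z).
  { intros d. unfold g2. replace (d + - e)%Z with (d - e)%Z by lia.
    replace d with ((d - e) + e)%Z at 1 by lia. rewrite plus_IZR. ring. }
  assert (ZZ0 : Zs (fun d => F (d + - e)%Z)) by (apply -> Zs_shift; auto).
  assert (ZZ1 : Zs (fun d => g1 (d + - e)%Z)) by (apply -> Zs_shift; auto).
  assert (ZZ2 : Zs (fun d => g2 (d + - e)%Z)) by (apply -> Zs_shift; auto).
  split; [|split; [|split]].
  - split; [|split].
    + eapply Zs_ext; [|apply ZZ0]. intros; symmetry; auto.
    + eapply Zs_ext; [|apply ZZ1]. intros; symmetry; auto.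
    + eapply Zs_ext; [|apply ZZ2]. intros; symmetry; auto.
  - unfold S0. rewrite (sumZ_ext _ _ E0). apply sumZ_shift; auto.
  - unfold S1. rewrite (sumZ_ext _ _ E1). rewrite sumZ_shift; auto. unfold g1.
    rewrite sumZ_plus; auto. rewrite sumZ_scal. reflexivity. apply Zs_scal; auto.
  - unfold S2. rewrite (sumZ_ext _ _ E2). rewrite sumZ_shift; auto. unfold g2.
    rewrite sumZ_plus; auto. rewrite sumZ_plus; try apply Zs_scal; auto.
    rewrite !sumZ_scal. unfold S1, S0. ring.
    apply Zs_plus; apply Zs_scal; auto.
Qed.

Lemma mom_mix : forall (F : nat -> Z -> R) (e : nat -> Z) B G,
  (forall d, G d = / INR B * rsum (fun a => F a (d - e a)%Z) B) ->
  (forall a, (a < B)%nat -> MomOK (F a)) ->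
  MomOK G /\ S0 G = / INR B * rsum (fun a => S0 (F a)) B /\
  S1 G = / INR B * rsum (fun a => S1 (F a) + IZR (e a) * S0 (F a)) B /\
  S2 G = / INR B * rsum (fun a => S2 (F a) + 2 * IZR (e a) * S1 (F a) + IZR (e a) ^ 2 * S0 (F a)) B.
Proof.
  intros F e B G HG HF.
  assert (Hs : forall a, (a < B)%nat -> _) by (intros a Ha; exact (mom_shift (F a) (e a) (HF a Ha))).
  destruct (Zs_rsum (fun a d => F a (d - e a)%Z) B) as [A0 B0].
  { intros a Ha. destruct (Hs a Ha) as [[? _] _]. auto. }
  destruct (Zs_rsum (fun a d => IZR d * F a (d - e a)%Z) B) as [A1 B1].
  { intros a Ha. destruct (Hs a Ha) as [[_ [? _]] _]. auto. }
  destruct (Zs_rsum (fun a d => IZR d ^ 2 * F a (d - e a)%Z) B) as [A2 B2].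
  { intros a Ha. destruct (Hs a Ha) as [[_ [_ ?]] _]. auto. }
  assert (G0 : forall d, G d = / INR B * rsum (fun a => F a (d - e a)%Z) B) by auto.
  assert (G1 : forall d, IZR d * G d = / INR B * rsum (fun a => IZR d * F a (d - e a)%Z) B).
  { intros d. rewrite HG, rsum_scal. ring. }
  assert (G2 : forall d, IZR d ^ 2 * G d = / INR B * rsum (fun a => IZR d ^ 2 * F a (d - e a)%Z) B).
  { intros d. rewrite HG, rsum_scal. ring. }
  split; [|split; [|split]].
  - split; [|split].
    + eapply Zs_ext. intros; symmetry; apply G0. apply Zs_scal; auto.
    + eapply Zs_ext. intros; symmetry; apply G1. apply Zs_scal; auto.
    + eapply Zs_ext. intros; symmetry; apply G2. apply Zs_scal; auto.
  - unfold S0. rewrite (sumZ_ext _ _ G0), sumZ_scal, B0. f_equal.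
    apply rsum_ext. intros a Ha. destruct (Hs a Ha) as [_ [? _]]. auto.
  - unfold S1. rewrite (sumZ_ext _ _ G1), sumZ_scal, B1. f_equal.
    apply rsum_ext. intros a Ha. destruct (Hs a Ha) as [_ [_ [? _]]]. auto.
  - unfold S2. rewrite (sumZ_ext _ _ G2), sumZ_scal, B2. f_equal.
    apply rsum_ext. intros a Ha. destruct (Hs a Ha) as [_ [_ [_ ?]]]. auto.
Qed.

Lemma rsum_rot1 : forall h B, (1 <= B)%nat -> rsum (fun a => h ((a + 1) mod B)%nat) B = rsum h B.
Proof.
  intros h B HB. rewrite rsum_last by lia. destruct B as [|B']; [lia|].
  replace (S B' - 1)%nat with B' by lia.
  replace ((B' + 1) mod S B')%nat with 0%nat by (replace (B'+1)%nat with (S B') by lia; rewrite Nat.mod_same; lia).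
  rewrite rsum_first. rewrite (rsum_ext _ (fun i => h (S i))).
  - ring.
  - intros i Hi. f_equal. rewrite Nat.mod_small; lia.
Qed.

Lemma rsum_rot : forall h B t, (1 <= B)%nat -> (t <= B)%nat ->
  rsum (fun a => h ((a + t) mod B)%nat) B = rsum h B.
Proof.
  intros h B t HB. induction t; intros Ht.
  - apply rsum_ext. intros i Hi. f_equal. rewrite Nat.add_0_r, Nat.mod_small; lia.
  - rewrite <- IHt by lia.
    rewrite <- (rsum_rot1 (fun x => h ((x + t) mod B)%nat)) by lia.
    apply rsum_ext. intros i Hi. f_equal.
    rewrite Nat.add_mod_idemp_l by lia. f_equal. lia.
Qed.

Lemma rsum_minus : forall f g n, rsum (fun i => f i - g i) n = rsum f n - rsum g n.
Proof. induction n; simpl; intros; lra. Qed.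

Lemma exR_le : forall a c : nat -> R, (forall n, Rabs (a n) <= c n) -> ex_series c -> ex_series a.
Proof. intros a c H Hc. apply (@ex_series_le R_AbsRing R_CompleteNormedModule a c); auto. Qed.

Section Main.
Variable b : nat.
Hypothesis Hb : (2 <= b)%nat.

Lemma ee_sum : forall B t, (1 <= B)%nat -> (t <= B)%nat -> rsum (fun a => IZR (ee b B t a)) B = 0.
Proof.
  intros B t HB Ht. unfold ee.
  rewrite (rsum_ext _ (fun a => (fun x => INR (digsum b x)) ((a + t) mod B)%nat - INR (digsum b a))).
  - rewrite rsum_minus. rewrite (rsum_rot (fun x => INR (digsum b x)) B t) by auto. ring.
  - intros i _. rewrite minus_IZR, <- !INR_IZR_INZ. reflexivity.
Qed.

Lemma ccB1 : forall B a, (a < B)%nat -> cc B 1 a = (if Nat.eqb a (B - 1) then 1 else 0)%nat.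
Proof.
  intros B a Ha. unfold cc. destruct (Nat.eqb_spec a (B-1)).
  - subst. replace (B - 1 + 1)%nat with B by lia. apply Nat.div_same; lia.
  - apply Nat.div_small; lia.
Qed.

Lemma mix_mom : forall m r' t, (t <= b ^ m)%nat ->
  (forall a, (a < b ^ m)%nat ->
     (forall d, exists L : R, is_lim_seq (U b (r' + cc (b ^ m) t a) d) L) /\ MomOK (mu b (r' + cc (b ^ m) t a))) ->
  let F := fun a => mu b (r' + cc (b ^ m) t a) in
  let e := ee b (b ^ m) t in
  let B := (b ^ m)%nat in
  MomOK (mu b (b ^ m * r' + t)) /\ S0 (mu b (b ^ m * r' + t)) = / INR B * rsum (fun a => S0 (F a)) B /\
  S1 (mu b (b ^ m * r' + t)) = / INR B * rsum (fun a => S1 (F a) + IZR (e a) * S0 (F a)) B /\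
  S2 (mu b (b ^ m * r' + t)) = / INR B * rsum (fun a => S2 (F a) + 2 * IZR (e a) * S1 (F a) + IZR (e a) ^ 2 * S0 (F a)) B.
Proof.
  intros m r' t Ht H F e B.
  apply mom_mix.
  - intros d. apply mu_mix; auto. intros a Ha. apply H; auto.
  - intros a Ha. apply H; auto.
Qed.

Lemma mu1_MomOK : MomOK (mu b 1).
Proof.
  destruct (rho_props b Hb) as [[Hr0 Hr1] _].
  set (rho := rho b) in *.
  assert (Hmaj : ex_series (fun n => (INR n + 1) ^ 2 * rho ^ n)).
  { apply ex_series_ext with (a := fun n => Rabs ((INR n + 1) ^ 2 * rho ^ n)).
    { intros n. rewrite Rabs_right; auto. apply Rle_ge. apply Rmult_le_pos.
      apply pow_le. pose proof (pos_INR n); lra. apply pow_le; lra. }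
    apply ex_series_DAlembert with (k := rho); auto.
    - intros n. apply Rgt_not_eq, Rlt_gt. apply Rmult_lt_0_compat. apply pow_lt. pose proof (pos_INR n); lra. apply pow_lt; lra.
    - apply is_lim_seq_ext with (u := fun n => rho * ((1 + / (INR n + 1)) ^ 2)).
      { intros n. assert (0 < INR n + 1) by (pose proof (pos_INR n); lra).
        rewrite S_INR. rewrite Rabs_right.
        - simpl. field. split; [|lra]. apply Rgt_not_eq, Rlt_gt. apply pow_lt; lra.
        - apply Rle_ge. unfold Rdiv. apply Rmult_le_pos. apply Rmult_le_pos. apply pow_le; lra. apply pow_le; lra.
          left. apply Rinv_0_lt_compat. apply Rmult_lt_0_compat. apply pow_lt; lra. apply pow_lt; lra. }
      replace (Finite rho) with (Finite (rho * ((1 + 0) * ((1 + 0) * 1)))) by (f_equal; ring).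
      assert (Hi : is_lim_seq (fun n => / (INR n + 1)) 0).
      { pose proof lim_inv_n as L0. apply is_lim_seq_incr_1 in L0. eapply is_lim_seq_ext; [|apply L0].
        intros n; cbv beta; rewrite S_INR; auto. }
      assert (Hp : is_lim_seq (fun n => 1 + / (INR n + 1)) (1 + 0)).
      { apply is_lim_seq_plus'. apply is_lim_seq_const. auto. }
      simpl. apply (is_lim_seq_scal_l _ rho (Finite ((1 + 0) * ((1 + 0) * 1)))).
      apply is_lim_seq_mult'; auto. apply is_lim_seq_mult'; auto. apply is_lim_seq_const. }
  assert (Hdec : forall k, mu b 1 (- Z.of_nat k - 1)%Z <= rho ^ k).
  { intros k. replace (- Z.of_nat k - 1)%Z with (- Z.of_nat (S k))%Z by lia.
    eapply Rle_trans. apply mu1_decay; auto. simpl.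
    pose proof (pow_le rho k ltac:(lra)). fold rho. nra. }
  assert (Hpos : forall d, 0 <= mu b 1 d) by (intros; apply mu1_bounds; auto).
  assert (HIZ : forall k, IZR (- Z.of_nat k - 1) = - (INR k + 1)).
  { intros k. rewrite minus_IZR, opp_IZR, <- INR_IZR_INZ. simpl. ring. }
  assert (Hk1 : forall k, 1 <= INR k + 1) by (intros k; pose proof (pos_INR k); lra).
  assert (Hz : forall (g : Z -> R), (forall d, (2 <= d)%Z -> g d = 0) -> ex_series (fun k => g (Z.of_nat k))).
  { intros g Hg. apply (ex_series_evzero _ 2). intros n Hn. apply Hg. lia. }
  split; [|split]; split.
  - apply Hz. intros. apply mu1_zero; auto.
  - apply (exR_le _ (fun n => (INR n + 1) ^ 2 * rho ^ n)); auto. intros n.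
    simpl. rewrite Rabs_right by (apply Rle_ge; auto).
    specialize (Hdec n). specialize (Hk1 n). pose proof (Hpos (- Z.of_nat n - 1)%Z).
    assert (1 <= (INR n + 1) * (INR n + 1)) by nra. nra.
  - apply (Hz (fun d => IZR d * mu b 1 d)). intros. rewrite mu1_zero; auto. ring.
  - apply (exR_le _ (fun n => (INR n + 1) ^ 2 * rho ^ n)); auto. intros n.
    simpl. rewrite HIZ. rewrite Rabs_mult, Rabs_Ropp, !Rabs_right by (apply Rle_ge; auto; specialize (Hk1 n); lra).
    specialize (Hdec n). specialize (Hk1 n). pose proof (Hpos (- Z.of_nat n - 1)%Z).
    pose proof (pow_le rho n ltac:(lra)). nra.
  - apply (Hz (fun d => IZR d ^ 2 * mu b 1 d)). intros. rewrite mu1_zero; auto. ring.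
  - apply (exR_le _ (fun n => (INR n + 1) ^ 2 * rho ^ n)); auto. intros n.
    simpl. rewrite HIZ. rewrite Rabs_right.
    + specialize (Hdec n). specialize (Hk1 n). pose proof (Hpos (- Z.of_nat n - 1)%Z).
      pose proof (pow_le rho n ltac:(lra)). nra.
    + apply Rle_ge. pose proof (Hpos (- Z.of_nat n - 1)%Z). apply Rmult_le_pos; auto. specialize (Hk1 n). nra.
Qed.

End Main.

Lemma sum_t1 : forall B (f g : nat -> R), (1 <= B)%nat -> (forall a, (a < B - 1)%nat -> f a = g a) ->
  rsum f B = rsum g (B - 1) + f (B - 1)%nat.
Proof. intros. rewrite rsum_last by auto. f_equal. apply rsum_ext; auto. Qed.

Section Final.
Variable b : nat.
Hypothesis Hb : (2 <= b)%nat.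

Lemma mu0_facts : MomOK (mu b 0) /\ S0 (mu b 0) = 1 /\ S1 (mu b 0) = 0 /\ S2 (mu b 0) = 0.
Proof.
  assert (Hm : forall d, mu b 0 d = if Z.eqb d 0 then 1 else 0) by (intros; apply mu0; auto).
  destruct (Zs_dirac (mu b 0)) as [A0 B0].
  { intros d Hd. rewrite Hm. destruct (Z.eqb_spec d 0); auto; lia. }
  destruct (Zs_dirac (fun d => IZR d * mu b 0 d)) as [A1 B1].
  { intros d Hd. rewrite Hm. destruct (Z.eqb_spec d 0); try lia. ring. }
  destruct (Zs_dirac (fun d => IZR d ^ 2 * mu b 0 d)) as [A2 B2].
  { intros d Hd. rewrite Hm. destruct (Z.eqb_spec d 0); try lia. ring. }
  split. split; auto.
  unfold S0, S1, S2. rewrite B0, B1, B2. rewrite Hm. simpl. split; [|split]; ring.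
Qed.

Lemma mu1_facts : S0 (mu b 1) = 1 /\ S1 (mu b 1) = 0 /\ S2 (mu b 1) = INR b.
Proof.
  destruct mu0_facts as [M0 [A0 [A1 A2]]].
  pose proof (mix_mom b Hb 1 0 1) as H. cbv zeta in H.
  destruct H as [_ [E0 [E1 E2]]].
  { rewrite Nat.pow_1_r; lia. }
  { intros a Ha. rewrite Nat.pow_1_r in Ha |- *. rewrite (ccB1 b Hb) by lia.
    destruct (Nat.eqb_spec a (b - 1)); simpl.
    - split. apply (U1_ex b Hb). apply (mu1_MomOK b Hb).
    - split. intros d; eexists; apply U0; auto. auto. }
  replace (b ^ 1 * 0 + 1)%nat with 1%nat in E0, E1, E2 by lia.
  rewrite Nat.pow_1_r in E0, E1, E2.
  assert (HbR : 2 <= INR b) by (apply (le_INR 2); auto).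
  assert (Hbm : INR (b - 1) = INR b - 1) by (rewrite minus_INR by lia; simpl; ring).
  assert (Hcl : cc b 1 (b - 1) = 1%nat) by (rewrite (ccB1 b Hb) by lia; rewrite Nat.eqb_refl; auto).
  assert (Hel : IZR (ee b b 1 (b - 1)) = - (INR b - 1)).
  { rewrite (ee1 b Hb) by lia. rewrite Nat.eqb_refl. rewrite opp_IZR, <- INR_IZR_INZ. lra. }
  rewrite (sum_t1 b _ (fun _ => 1)) in E0 by (first [lia | intros a Ha; rewrite (ccB1 b Hb) by lia;
    destruct (Nat.eqb_spec a (b - 1)); [lia|]; simpl; auto]).
  rewrite (sum_t1 b _ (fun _ => 1)) in E1.
  2: lia.
  2:{ intros a Ha; rewrite (ccB1 b Hb), (ee1 b Hb) by lia. destruct (Nat.eqb_spec a (b - 1)); [lia|]; simpl. rewrite A0, A1. ring. }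
  rewrite (sum_t1 b _ (fun _ => 1)) in E2.
  2: lia.
  2:{ intros a Ha; rewrite (ccB1 b Hb), (ee1 b Hb) by lia. destruct (Nat.eqb_spec a (b - 1)); [lia|]; simpl. rewrite A0, A1, A2. ring. }
  rewrite Hcl, Hel in *. simpl (0 + 1)%nat in *. rewrite rsum_const, Hbm in E0, E1, E2.
  assert (HbI : INR b * / INR b = 1) by (field; lra).
  assert (E0' : INR b * S0 (mu b 1) = (INR b - 1) + S0 (mu b 1)).
  { rewrite E0 at 1. rewrite <- Rmult_assoc, HbI. ring. }
  assert (S0 (mu b 1) = 1) by nra.
  rewrite H in E1, E2.
  assert (E1' : INR b * S1 (mu b 1) = (INR b - 1) + (S1 (mu b 1) - (INR b - 1))).
  { rewrite E1 at 1. rewrite <- Rmult_assoc, HbI. ring. }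
  assert (S1 (mu b 1) = 0) by nra.
  rewrite H0 in E2.
  assert (E2' : INR b * S2 (mu b 1) = (INR b - 1) + (S2 (mu b 1) + (INR b - 1) ^ 2)).
  { rewrite E2 at 1. rewrite <- Rmult_assoc, HbI. ring. }
  split; auto. split; auto. nra.
Qed.

Lemma main_ind : forall r, (forall d, exists L : R, is_lim_seq (U b r d) L) /\ MomOK (mu b r) /\
  S0 (mu b r) = 1 /\ S1 (mu b r) = 0.
Proof.
  intros r. induction r as [r IH] using lt_wf_ind.
  destruct r as [|[|r0]].
  - destruct mu0_facts as [M0 [A0 [A1 A2]]]. split; auto. intros d; eexists; apply U0; auto.
  - destruct mu1_facts as [A0 [A1 A2]]. split. apply U1_ex; auto. split; auto. apply mu1_MomOK; auto.
  - set (r := S (S r0)) in *.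
    set (r' := (r / b)%nat). set (t := (r mod b)%nat).
    assert (Hrr : r = (b ^ 1 * r' + t)%nat).
    { rewrite Nat.pow_1_r. unfold r', t. apply Nat.div_mod. lia. }
    assert (Ht : (t < b)%nat) by (apply Nat.mod_upper_bound; lia).
    assert (Hr' : (r' < r)%nat) by (apply Nat.div_lt; unfold r; lia).
    assert (Hcomp : forall a, (a < b ^ 1)%nat -> (r' + cc (b ^ 1) t a < r)%nat).
    { intros a Ha. rewrite Nat.pow_1_r in *. unfold cc.
      destruct (lt_dec (a + t) b).
      - rewrite Nat.div_small by auto. lia.
      - assert ((a + t) / b < 2)%nat by (apply Nat.div_lt_upper_bound; lia).
        assert (1 <= t)%nat by lia. unfold r in *. nia. }
    assert (Hc : forall a, (a < b ^ 1)%nat ->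
      (forall d, exists L : R, is_lim_seq (U b (r' + cc (b ^ 1) t a) d) L) /\ MomOK (mu b (r' + cc (b ^ 1) t a))).
    { intros a Ha. destruct (IH _ (Hcomp a Ha)) as [? [? _]]. auto. }
    pose proof (mix_mom b Hb 1 r' t) as H. cbv zeta in H.
    destruct H as [M [E0 [E1 _]]]; auto.
    { rewrite Nat.pow_1_r; lia. }
    rewrite Hrr. split; [|split; [auto|split]].
    + intros d. eexists. apply mixture_lim; auto. { rewrite Nat.pow_1_r; lia. }
      intros a Ha. apply Hc; auto.
    + rewrite E0. rewrite (rsum_ext _ (fun _ => 1)).
      * rewrite rsum_const. field. apply Rgt_not_eq, lt_0_INR. rewrite Nat.pow_1_r; lia.
      * intros a Ha. destruct (IH _ (Hcomp a Ha)) as [_ [_ [? _]]]. auto.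
    + rewrite E1. rewrite (rsum_ext _ (fun a => IZR (ee b (b ^ 1) t a))).
      * rewrite ee_sum; auto. ring. rewrite Nat.pow_1_r; lia. rewrite Nat.pow_1_r; lia.
      * intros a Ha. destruct (IH _ (Hcomp a Ha)) as [_ [_ [H0 H1]]]. rewrite H0, H1. ring.
Qed.

Lemma S2_formula : forall rh m, (1 <= m)%nat ->
  S2 (mu b (b ^ m * rh + 1)) = / INR (b ^ m) * ((INR (b ^ m) - 1) * S2 (mu b rh) + S2 (mu b (rh + 1)) +
     rsum (fun a => IZR (ee b (b ^ m) 1 a) ^ 2) (b ^ m)).
Proof.
  intros rh m Hm.
  assert (HB : (2 <= b ^ m)%nat).
  { destruct m; [lia|]. simpl. pose proof (Nat.pow_nonzero b m ltac:(lia)). nia. }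
  pose proof (mix_mom b Hb m rh 1) as H. cbv zeta in H.
  destruct H as [_ [_ [_ E2]]].
  { lia. }
  { intros a Ha. destruct (main_ind (rh + cc (b ^ m) 1 a)) as [? [? _]]. auto. }
  rewrite E2. f_equal.
  rewrite (rsum_ext _ (fun a => S2 (mu b (rh + cc (b ^ m) 1 a)) + IZR (ee b (b ^ m) 1 a) ^ 2)).
  2:{ intros a Ha. destruct (main_ind (rh + cc (b ^ m) 1 a)) as [_ [_ [H0 H1]]]. rewrite H0, H1. ring. }
  rewrite rsum_plus. f_equal.
  rewrite (sum_t1 (b ^ m) _ (fun _ => S2 (mu b rh))) by (first [lia | intros a Ha; rewrite (ccB1 b Hb) by lia;
    destruct (Nat.eqb_spec a (b ^ m - 1)); [lia|]; rewrite Nat.add_0_r; auto]).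
  rewrite rsum_const. rewrite (ccB1 b Hb) by lia. rewrite Nat.eqb_refl. rewrite minus_INR by lia. simpl. ring.
Qed.

End Final.

Theorem mainTheorem13 (b : nat) (Hb : (2 <= b)%nat) (rh m : nat) (Hm : (1 <= m)%nat) :
  VarMu (mu b (b ^ m * rh + 1)%nat) =
    (1 - 1 / INR b ^ m) * VarMu (mu b rh)
    + 1 / INR b ^ m * VarMu (mu b (rh + 1)%nat)
    + INR b - 1 / INR b ^ (m - 1).
Proof.
  assert (HB : (2 <= b ^ m)%nat).
  { destruct m; [lia|]. simpl. pose proof (Nat.pow_nonzero b m ltac:(lia)). nia. }
  pose proof (S2_formula b Hb 0 m Hm) as T.
  replace (b ^ m * 0 + 1)%nat with 1%nat in T by lia. simpl (0 + 1)%nat in T.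
  destruct (mu0_facts b Hb) as [_ [_ [_ Z0]]]. destruct (mu1_facts b Hb) as [_ [_ Z1]].
  rewrite Z0, Z1 in T.
  set (TT := rsum (fun a => IZR (ee b (b ^ m) 1 a) ^ 2) (b ^ m)) in *.
  assert (HBR : 2 <= INR (b ^ m)) by (apply (le_INR 2); auto).
  assert (HT : TT = (INR (b ^ m) - 1) * INR b).
  { apply (Rmult_eq_reg_l (/ INR (b ^ m))). 2:{ apply Rinv_neq_0_compat. lra. }
    apply (Rplus_eq_reg_l (/ INR (b ^ m) * INR b)). rewrite Rmult_plus_distr_l in T.
    transitivity (INR b). 2: field; lra.
    rewrite T at 2. ring. }
  unfold VarMu. fold (S2 (mu b (b ^ m * rh + 1))). fold (S1 (mu b (b ^ m * rh + 1))).
  fold (S2 (mu b rh)). fold (S1 (mu b rh)). fold (S2 (mu b (rh + 1))). fold (S1 (mu b (rh + 1))).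
  destruct (main_ind b Hb (b ^ m * rh + 1)) as [_ [_ [_ ->]]].
  destruct (main_ind b Hb rh) as [_ [_ [_ ->]]].
  destruct (main_ind b Hb (rh + 1)) as [_ [_ [_ ->]]].
  rewrite S2_formula by auto. fold TT. rewrite HT.
  rewrite pow_INR.
  assert (HbR : 2 <= INR b) by (apply (le_INR 2); auto).
  assert (Hp : INR b ^ m = INR b * INR b ^ (m - 1)).
  { replace m with (S (m - 1)) at 1 by lia. reflexivity. }
  rewrite Hp.
  assert (0 < INR b ^ (m - 1)) by (apply pow_lt; lra).
  field. lra.
Qed.
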